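(* Let $\sigma,\mu\in S_n$. Then: (i) $\mathrm{Seg}(\sigma)$ is a partition of $\{1,\dots,n\}$. (ii) The intersection of any two $\sigma$-sections is either a $\sigma$-section or empty. (iii) The $\sigma$-sections are exactly the nonempty intervals of $\{1<\dots<n\}$ that are unions of $\sigma$-segments. (iv) $(\sigma,\mu)\in\rho_{ie}$ if and only if there are pairwise disjoint $\sigma$-sections $J_1,\dots,J_t$ with $J_1\cup\dots\cup J_t=\{1,\dots,n\}$ such that $\mu|_{J_i}\in\{\sigma|_{J_i},(\sigma|_{J_i})^{-1}\}$ for $i=1,\dots,t$. (v) $\rho_{ie}$ is an equivalence relation on $S_n$.
   Context: $S_n$ is the set of permutations of $\{1,\dots,n\}$ with the order $1<\dots<n$. For $\sigma\in S_n$, a subset $I$ is closed if $\sigma(i)\in I$ for all $i\in I$ ($\emptyset$ is closed). A nonempty interval $I=\{u,\dots,v\}$ is a $\sigma$-section if $\{1,\dots,u-1\}$, $I$ and $\{v+1,\dots,n\}$ are closed. Inclusion-minimal $\sigma$-sections are $\sigma$-segments; $\mathrm{Seg}(\sigma)$ is the set of them. $(\sigma,\mu)\in\rho_{ie}$ iff $\mathrm{Seg}(\sigma)=\mathrm{Seg}(\mu)$ and for all $I\in\mathrm{Seg}(\sigma)$, $\mu|_I\in\{\sigma|_I,(\sigma|_I)^{-1}\}$ (restrictions). *)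

(* Defs.v *)
(* Elements 1..n of the paper are represented by 'I_n = {0,..,n-1}
   with its usual order; S_n is 'S_n. *)
From mathcomp Require Import all_boot all_fingroup.
Set Implicit Arguments. Unset Strict Implicit. Unset Printing Implicit Defensive.

Section Sections.
Variable n : nat.
Implicit Types (s m : 'S_n) (I J : {set 'I_n}).

Definition closed s I : bool := [forall i in I, s i \in I].

Definition ival (u v : 'I_n) : {set 'I_n} := [set i : 'I_n | u <= i <= v].

Definition is_interval I : bool :=
  [exists u : 'I_n, exists v : 'I_n, (u <= v) && (I == ival u v)].

Definition section s I : bool :=
  [exists u : 'I_n, exists v : 'I_n,
     [&& u <= v, I == ival u v,
         closed s [set i : 'I_n | i < u], closed s I
       & closed s [set i : 'I_n | v < i]]].

Definition segment s I : bool :=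
  section s I && [forall J : {set 'I_n}, (section s J && (J \subset I)) ==> (J == I)].

Definition Seg s : {set {set 'I_n}} := [set I | segment s I].

(* m|_I \in {s|_I, (s|_I)^-1}, for an s-closed I *)
Definition restr_rel s m I : bool :=
  [forall i in I, m i == s i] || [forall i in I, m i == (s^-1)%g i].

Definition rho_ie s m : bool :=
  (Seg s == Seg m) && [forall I in Seg s, restr_rel s m I].

End Sections.

(* Main.v *)
Require Import Defs.
From mathcomp Require Import all_boot all_fingroup zify.
Import Defs.
Set Implicit Arguments. Unset Strict Implicit. Unset Printing Implicit Defensive.

Definition pre n (k : nat) : {set 'I_n} := [set i : 'I_n | i < k].
Definition iv n (a b : nat) : {set 'I_n} := [set i : 'I_n | a <= i < b].
Definition cut n (s : 'S_n) k := closed s (pre n k).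

Lemma closedP n (s : 'S_n) (A : {set 'I_n}) :
  closed s A -> forall i, (s i \in A) = (i \in A).
Proof.
move=> /forallP H i.
have sub : s @: A \subset A.
  by apply/subsetP => _ /imsetP[j jA ->]; exact: (implyP (H j) jA).
have eA : s @: A = A.
  by apply/eqP; rewrite eqEcard sub (card_imset _ (@perm_inj _ s)) leqnn.
by rewrite -{1}eA (mem_imset _ _ (@perm_inj _ s)).
Qed.

Lemma closedE n (s : 'S_n) (A : {set 'I_n}) :
  reflect (forall i, (s i \in A) = (i \in A)) (closed s A).
Proof.
apply: (iffP idP); first exact: closedP.
by move=> H; apply/forallP => i; apply/implyP => iA; rewrite H.
Qed.

Lemma closedC n (s : 'S_n) A : closed s A -> closed s (~: A).
Proof. by move/closedP=> H; apply/closedE => i; rewrite !inE H. Qed.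
Lemma closedI n (s : 'S_n) A B : closed s A -> closed s B -> closed s (A :&: B).
Proof. by move/closedP=> H1 /closedP H2; apply/closedE => i; rewrite !inE H1 H2. Qed.
Lemma closedU n (s : 'S_n) A B : closed s A -> closed s B -> closed s (A :|: B).
Proof. by move/closedP=> H1 /closedP H2; apply/closedE => i; rewrite !inE H1 H2. Qed.
Lemma closedV n (s : 'S_n) A : closed s A -> closed s^-1 A.
Proof. by move/closedP=> H; apply/closedE => i; rewrite -H permKV. Qed.
Lemma closedT n (s : 'S_n) : closed s setT.
Proof. by apply/closedE => i; rewrite !inE. Qed.

Lemma ivE n a b : iv n a b = pre n b :\: pre n a.
Proof. by apply/setP => i; rewrite !inE -leqNgt. Qed.

Lemma preT n k : n <= k -> pre n k = setT.
Proof. by move=> h; apply/setP => i; rewrite !inE; have := ltn_ord i; lia. Qed.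

Lemma ivalE n (u v : 'I_n) : ival u v = iv n u v.+1.
Proof. by apply/setP => i; rewrite !inE. Qed.

Lemma sectionP n (s : 'S_n) I :
  reflect (exists a b, [/\ a < b <= n, cut s a, cut s b & I = iv n a b]) (section s I).
Proof.
apply: (iffP existsP).
  move=> [u /existsP[v /and5P[uv /eqP -> c1 c2 c3]]].
  exists u, v.+1; split; first by have := ltn_ord v; lia.
  - exact: c1.
  - rewrite /cut; have -> : pre n v.+1 = ~: [set i : 'I_n | v < i].
      by apply/setP => i; rewrite !inE ltnS leqNgt.
    exact: closedC.
  - exact: ivalE.
move=> [a [b [ab ca cb ->]]].
have an : a < n by lia.
have bn : b.-1 < n by lia.
exists (Ordinal an); apply/existsP; exists (Ordinal bn).
have e : ival (Ordinal an) (Ordinal bn) = iv n a b.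
  by rewrite ivalE /=; congr iv; lia.
rewrite e eqxx /=; apply/and4P; split.
- by rewrite /=; lia.
- exact: ca.
- by rewrite ivE setDE; apply: closedI => //; apply: closedC.
- have -> : [set i : 'I_n | Ordinal bn < i] = ~: pre n b.
    by apply/setP => i; rewrite !inE /=; lia.
  exact: closedC.
Qed.

Lemma iv_inj n a b c d : a < b <= n -> c < d <= n -> iv n a b = iv n c d -> a = c /\ b = d.
Proof.
move=> h1 h2 E.
have F : forall k, k < n -> (a <= k < b) = (c <= k < d).
  move=> k kn; have : (Ordinal kn \in iv n a b) = (Ordinal kn \in iv n c d) by rewrite E.
  by rewrite !inE.
have := F a ltac:(lia); have := F c ltac:(lia); have := F b.-1 ltac:(lia); have := F d.-1 ltac:(lia).
lia.
Qed.

Lemma iv_sub n a b c d : c < d <= n -> iv n c d \subset iv n a b -> a <= c /\ d <= b.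
Proof.
move=> h /subsetP S.
have F : forall k, k < n -> c <= k < d -> a <= k < b.
  by move=> k kn hk; have := S (Ordinal kn); rewrite !inE /=; apply.
have := F c ltac:(lia); have := F d.-1 ltac:(lia); lia.
Qed.

Lemma ivI n a b c d : iv n a b :&: iv n c d = iv n (maxn a c) (minn b d).
Proof. by apply/setP => i; rewrite !inE; lia. Qed.

Lemma iv0 n a b : b <= a -> iv n a b = set0.
Proof. by move=> h; apply/setP => i; rewrite !inE; lia. Qed.

Lemma cutT n (s : 'S_n) k : n <= k -> cut s k.
Proof. by move=> h; rewrite /cut preT //; exact: closedT. Qed.

Lemma cut0 n (s : 'S_n) : cut s 0.
Proof.
rewrite /cut; have -> : pre n 0 = set0 by apply/setP => i; rewrite !inE.
by apply/closedE => i; rewrite !inE.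
Qed.

Lemma section_ne n (s : 'S_n) I : section s I -> I != set0.
Proof.
move/sectionP => [a [b [h _ _ ->]]].
have an : a < n by lia.
by apply/set0Pn; exists (Ordinal an); rewrite inE /=; lia.
Qed.

Lemma segmentP n (s : 'S_n) I :
  reflect (exists a b, [/\ a < b <= n, cut s a, cut s b, I = iv n a b
            & forall c, a < c < b -> ~~ cut s c]) (segment s I).
Proof.
apply: (iffP andP).
  move=> [/sectionP [a [b [h ca cb ->]]] /forallP M].
  exists a, b; split => // c hc; apply/negP => cc.
  have sJ : section s (iv n a c) by apply/sectionP; exists a, c; split => //; lia.
  have sub : iv n a c \subset iv n a b by apply/subsetP => i; rewrite !inE; lia.
  have /eqP E := implyP (M (iv n a c)) (introT andP (conj sJ sub)).
  have h3 : a < c <= n by lia.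
  have [_] := iv_inj h3 h E; lia.
move=> [a [b [h ca cb -> nc]]]; split.
  by apply/sectionP; exists a, b.
apply/forallP => J; apply/implyP => /andP [/sectionP [c [d [h2 cc cd ->]]] sub].
have [ac db] := iv_sub h2 sub.
have e1 : c = a by apply/eqP; apply: contraT => ne; have := nc c; rewrite cc; apply => //; lia.
have e2 : d = b by apply/eqP; apply: contraT => ne; have := nc d; rewrite cd; apply => //; lia.
by rewrite e1 e2.
Qed.

Lemma section_meet n (s : 'S_n) I J : section s I -> section s J ->
  section s (I :&: J) \/ I :&: J = set0.
Proof.
move=> /sectionP [a [b [h1 ca cb ->]]] /sectionP [c [d [h2 cc cd ->]]].
rewrite ivI; case: (ltnP (maxn a c) (minn b d)) => hm; last by right; exact: iv0.
left; apply/sectionP; exists (maxn a c), (minn b d); split.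
- lia.
- by rewrite /maxn; case: ltnP.
- by rewrite /minn; case: ltnP.
- by [].
Qed.

Lemma segment_cover n (s : 'S_n) (i : 'I_n) : exists T, segment s T /\ i \in T.
Proof.
have exM : exists k, (k <= i) && cut s k by exists 0; rewrite cut0 andbT.
have exm : exists k, (i < k) && cut s k by exists n; rewrite cutT // andbT.
have bM : forall k, (k <= i) && cut s k -> k <= i by move=> k /andP[].
case: (ex_maxnP exM bM) => a /andP [ai ca] Ma.
case: (ex_minnP exm) => b /andP [ib cb] mb.
exists (iv n a b); split; last by rewrite inE ai ib.
apply/segmentP; exists a, b; split => //.
- have := mb n; rewrite cutT // ltn_ord => /(_ isT); lia.
- move=> c hc; apply/negP => cc.
  case: (leqP c i) => ci.
    by have := Ma c; rewrite ci cc => /(_ isT); lia.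
  by have := mb c; rewrite ci cc => /(_ isT); lia.
Qed.

Lemma segment_meet n (s : 'S_n) T1 T2 : segment s T1 -> segment s T2 ->
  T1 :&: T2 != set0 -> T1 = T2.
Proof.
move=> /segmentP [a [b [h1 ca cb -> n1]]] /segmentP [c [d [h2 cc cd -> n2]]].
case/set0Pn => i; rewrite !inE => hi.
have e1 : a = c.
  apply/eqP; apply: contraT => ne; case: (ltnP a c) => ac.
    by have := n1 c; rewrite cc; apply => //; lia.
  by have := n2 a; rewrite ca; apply => //; lia.
have e2 : b = d.
  apply/eqP; apply: contraT => ne; case: (ltnP b d) => bd.
    by have := n2 b; rewrite cb; apply => //; lia.
  by have := n1 d; rewrite cd; apply => //; lia.
by rewrite e1 e2.
Qed.

Lemma segment_section n (s : 'S_n) I : segment s I -> section s I.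
Proof. by case/andP. Qed.

Lemma segment_in_section n (s : 'S_n) T I : segment s T -> section s I ->
  T :&: I != set0 -> T \subset I.
Proof.
move=> sT sI ne; case/andP: (sT) => secT /forallP M.
case: (section_meet secT sI) => [h|h]; last by rewrite h eqxx in ne.
have /eqP <- := implyP (M (T :&: I)) (introT andP (conj h (subsetIl _ _))).
exact: subsetIr.
Qed.

Lemma partSeg n (s : 'S_n) : partition (Seg s) [set: 'I_n].
Proof.
apply/and3P; split.
- apply/eqP/setP => i; rewrite inE; apply/bigcupP.
  by case: (segment_cover s i) => T [sT iT]; exists T; rewrite // inE.
- apply/trivIsetP => A B; rewrite !inE => sA sB ne.
  rewrite -setI_eq0; apply: contraR ne => h; by rewrite (segment_meet sA sB h).
- by rewrite inE; apply/negP => /segment_section /section_ne; rewrite eqxx.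
Qed.

Lemma cover_seg n (s : 'S_n) I : section s I ->
  I = cover [set T in Seg s | T \subset I].
Proof.
move=> sI; apply/setP => i; apply/idP/bigcupP.
  move=> iI; case: (segment_cover s i) => T [sT iT]; exists T => //.
  rewrite !inE sT /=; apply: (segment_in_section sT sI).
  by apply/set0Pn; exists i; rewrite inE iT iI.
by move=> [T]; rewrite !inE => /andP [_ /subsetP S] /S.
Qed.

Lemma sec_iff n (s : 'S_n) I : section s I <->
     (is_interval I /\ exists P : {set {set 'I_n}}, P \subset Seg s /\ I = cover P).
Proof.
split.
  move=> sI; split; last first.
    exists [set T in Seg s | T \subset I]; split; last exact: cover_seg.
    by apply/subsetP => T; rewrite inE => /andP[].
  case/sectionP: sI => a [b [h ca cb ->]].
  have an : a < n by lia.
  have bn : b.-1 < n by lia.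
  apply/existsP; exists (Ordinal an); apply/existsP; exists (Ordinal bn).
  rewrite /= ivalE /=; apply/andP; split; first by lia.
  by apply/eqP; congr iv; lia.
move=> [/existsP [u /existsP [v /andP [uv /eqP EI]]] [P [/subsetP PS EP]]].
have uI : u \in I by rewrite EI inE leqnn uv.
have vI : v \in I by rewrite EI inE leqnn uv.
rewrite ivalE in EI.
have segP : forall i, i \in I -> exists a b, [/\ a < b <= n, cut s a, cut s b,
     a <= i < b & iv n a b \subset I].
  move=> i; rewrite {1}EP => /bigcupP [T TP iT].
  have := PS T TP; rewrite inE => /segmentP [a [b [h ca cb ET _]]].
  exists a, b; split => //; first by move: iT; rewrite ET inE.
  by rewrite -ET EP; apply: bigcup_sup.
have [a [b [h ca cb hu sub]]] := segP u uI.
have [c [d [h' cc cd hv sub']]] := segP v vI.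
rewrite EI in sub sub'.
have [] := iv_sub h sub; have [] := iv_sub h' sub' => *.
apply/sectionP; exists u, v.+1; split.
- have := ltn_ord v; lia.
- by have -> : (u : nat) = a by lia.
- by have -> : v.+1 = d by lia.
- exact: EI.
Qed.

Lemma restrP n (s m : 'S_n) (I : {set 'I_n}) : reflect
  ({in I, forall i, m i = s i} \/ {in I, forall i, m i = (s^-1)%g i}) (restr_rel s m I).
Proof.
apply: (iffP orP).
  by case=> /forall_inP H; [left|right] => i /H /eqP.
by case=> H; [left|right]; apply/forall_inP => i /H ->.
Qed.

Lemma section_closed n (s : 'S_n) I : section s I -> closed s I.
Proof.
case/sectionP => a [b [_ ca cb ->]].
by rewrite ivE setDE; apply: closedI => //; apply: closedC.
Qed.

Lemma agree_inv n (x y : 'S_n) (I : {set 'I_n}) : closed x I -> {in I, forall i, y i = x i} ->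
  {in I, forall i, (y^-1)%g i = (x^-1)%g i}.
Proof.
move=> cx H i iI.
have xI : (x^-1)%g i \in I by rewrite -(closedP cx) permKV.
by rewrite -{1}[i](permKV x) -H // permK.
Qed.

Lemma restr_sub n (s m : 'S_n) (I J : {set 'I_n}) : J \subset I -> restr_rel s m I -> restr_rel s m J.
Proof.
move=> /subsetP S /restrP [H|H]; apply/restrP; [left|right] => i /S; exact: H.
Qed.

Lemma restr_sym n (s m : 'S_n) (I : {set 'I_n}) : closed s I -> restr_rel s m I -> restr_rel m s I.
Proof.
move=> cs /restrP [H|H]; apply/restrP; first by left => i iI; rewrite H.
right => i iI; have := agree_inv (closedV cs) H iI; rewrite invgK => ->.
by [].
Qed.

Lemma closed_ext n (x y : 'S_n) (A : {set 'I_n}) : {in A, forall i, x i = y i} -> closed x A = closed y A.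
Proof.
move=> H; apply/forall_inP/forall_inP => C i iA; by [rewrite -H // C | rewrite H // C].
Qed.

Lemma closedVE n (s : 'S_n) (A : {set 'I_n}) : closed (s^-1)%g A = closed s A.
Proof. apply/idP/idP => [/closedV|/closedV //]; by rewrite invgK. Qed.

Lemma restr_closed n (s m : 'S_n) (I : {set 'I_n}) : closed s I -> restr_rel s m I -> closed m I.
Proof.
move=> cs /restrP [H|H].
  by rewrite (closed_ext H).
by rewrite (closed_ext H) closedVE.
Qed.

Lemma restr_trans n (s m p : 'S_n) (I : {set 'I_n}) : closed s I -> closed m I ->
  restr_rel s m I -> restr_rel m p I -> restr_rel s p I.
Proof.
move=> cs cm /restrP [H1|H1] /restrP [H2|H2]; apply/restrP.
- by left => i iI; rewrite H2 // H1.
- right => i iI; rewrite H2 //; exact: agree_inv cs H1 i iI.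
- by right => i iI; rewrite H2 // H1.
- left => i iI; rewrite H2 //.
  have := agree_inv (closedV cs) H1 iI; rewrite invgK => ->; by [].
Qed.

Lemma cut_local n (x : 'S_n) a b k : cut x a -> closed x (iv n a b) -> a <= k <= b ->
  cut x k = closed x (iv n a k).
Proof.
move=> ca cI hk; apply/idP/idP => h.
  by rewrite ivE setDE; apply: closedI => //; apply: closedC.
rewrite /cut; have -> : pre n k = pre n a :|: iv n a k by apply/setP => i; rewrite !inE; lia.
exact: closedU.
Qed.

Lemma rho_iff n (s m : 'S_n) : rho_ie s m <->
     exists P : {set {set 'I_n}},
       [/\ {in P, forall J, section s J}, trivIset P, cover P = [set: 'I_n]
         & {in P, forall J, restr_rel s m J}].
Proof.
split.
  case/andP => _ /forall_inP R.
  case/and3P: (partSeg s) => /eqP cP tP _.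
  exists (Seg s); split => //.
  by move=> J; rewrite inE => /segment_section.
move=> [P [PS tP cP PR]].
have inP : forall i : 'I_n, exists2 J, J \in P & i \in J.
  move=> i; have : i \in cover P by rewrite cP inE.
  by move/bigcupP.
have cmP : forall J, J \in P -> closed m J.
  by move=> J JP; apply: (restr_closed (section_closed (PS J JP)) (PR J JP)).
have cutm : forall J a b, J \in P -> J = iv n a b -> a < b <= n -> cut m a.
  move=> J a b JP EJ hab; apply/forall_inP => i; rewrite !inE => ia.
  have [J' J'P iJ'] := inP i.
  have := PS J' J'P; case/sectionP => c [d [hcd _ _ EJ']].
  have da : d <= a.
    rewrite leqNgt; apply/negP => ad.
    have an : a < n by lia.
    case: (eqVneq J J') => [E|ne].
      by move: iJ'; rewrite -E EJ inE; lia.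
    have := trivIsetP tP J J' JP J'P ne; rewrite -setI_eq0 => /eqP E0.
    have : Ordinal an \in J :&: J' by rewrite EJ EJ' !inE /=; move: iJ'; rewrite EJ' inE; lia.
    by rewrite E0 inE.
  have : m i \in J' by rewrite (closedP (cmP J' J'P)).
  by rewrite EJ' inE; lia.
have cutE : forall k, cut s k = cut m k.
  move=> k; case: (ltnP k n) => kn; last by rewrite !cutT.
  have [J JP kJ] := inP (Ordinal kn).
  have := PS J JP; case/sectionP => a [b [hab ca _ EJ]].
  have cm := cutm J a b JP EJ hab.
  move: kJ; rewrite EJ inE /= => hk.
  have hk' : a <= k <= b by lia.
  have csJ := section_closed (PS J JP).
  rewrite (cut_local ca _ hk') -?EJ // (cut_local cm _ hk') -?EJ; last exact: cmP.
  have sub : iv n a k \subset J by rewrite EJ; apply/subsetP => i; rewrite !inE; lia.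
  case/restrP: (restr_sub sub (PR J JP)) => H.
    by rewrite (closed_ext H).
  by rewrite (closed_ext H) closedVE.
have secE : forall I, section s I = section m I.
  move=> I; apply/sectionP/sectionP => [] [a [b [h ca cb EI]]]; exists a, b; split => //.
  - by rewrite -cutE.
  - by rewrite -cutE.
  - by rewrite cutE.
  - by rewrite cutE.
have SegE : Seg s = Seg m.
  apply/setP => I; rewrite !inE /segment secE; congr andb.
  by apply: eq_forallb => J; rewrite secE.
apply/andP; split; first by rewrite SegE.
apply/forall_inP => T; rewrite inE => sT.
have /set0Pn [i iT] := section_ne (segment_section sT).
have [J JP iJ] := inP i.
apply: (restr_sub _ (PR J JP)); apply: (segment_in_section sT (PS J JP)).
by apply/set0Pn; exists i; rewrite inE iT iJ.
Qed.

Lemma seg_closed n (s : 'S_n) I : I \in Seg s -> closed s I.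
Proof. by rewrite inE => /segment_section /section_closed. Qed.

Lemma rho_refl n (s : 'S_n) : rho_ie s s.
Proof.
apply/andP; split => //; apply/forall_inP => I _; apply/restrP; by left.
Qed.

Lemma rho_sym1 n (s m : 'S_n) : rho_ie s m -> rho_ie m s.
Proof.
case/andP => /eqP E /forall_inP R; apply/andP; split; first by rewrite E.
apply/forall_inP => I; rewrite -E => IS.
exact: restr_sym (seg_closed IS) (R I IS).
Qed.

Lemma rho_trans n (s m p : 'S_n) : rho_ie s m -> rho_ie m p -> rho_ie s p.
Proof.
case/andP => /eqP E1 /forall_inP R1 /andP [/eqP E2 /forall_inP R2].
apply/andP; split; first by rewrite E1 E2.
apply/forall_inP => I IS.
have IM : I \in Seg m by rewrite -E1.
exact: restr_trans (seg_closed IS) (seg_closed IM) (R1 I IS) (R2 I IM).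
Qed.

Theorem lemma3p1 (n : nat) (s m : 'S_n) :
  (* (i) *)
  partition (Seg s) [set: 'I_n] /\
  (* (ii) *)
  (forall I J : {set 'I_n}, section s I -> section s J ->
     section s (I :&: J) \/ I :&: J = set0) /\
  (* (iii) *)
  (forall I : {set 'I_n}, section s I <->
     (is_interval I /\ exists P : {set {set 'I_n}}, P \subset Seg s /\ I = cover P)) /\
  (* (iv) *)
  (rho_ie s m <->
     exists P : {set {set 'I_n}},
       [/\ {in P, forall J, section s J}, trivIset P, cover P = [set: 'I_n]
         & {in P, forall J, restr_rel s m J}]) /\
  (* (v) *)
  (reflexive (@rho_ie n) /\ symmetric (@rho_ie n) /\ transitive (@rho_ie n)).
Proof.
split; first exact: partSeg.
split; first exact: section_meet.
split; first exact: sec_iff.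
split; first exact: rho_iff.
split; first exact: rho_refl.
split; last by move=> y x z; apply: rho_trans.
by move=> x y; apply/idP/idP; apply: rho_sym1.
Qed.
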